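(* (a) Let $\Lambda>0$ and let $Q_1,Q_2:[0,\Lambda]\to\mathbb R$ be continuous and strictly monotone, both strictly increasing or both strictly decreasing. Then there is a unique $\lambda_1\in\arg\min_{\lambda\in[0,\Lambda]}\bigl(Q_1(\lambda)-Q_2(\Lambda-\lambda)\bigr)^2$, i.e. the Wardrop equilibrium $(\lambda_1,\Lambda-\lambda_1)$ exists and is unique. (b) For a platform $i$ with static price $\phi_i\in[0,\phi_h]$ and abandonment rate $\beta_i>0$, the maps $\lambda_i\mapsto\mathcal D_i(\lambda_i)$ and $\lambda_i\mapsto\mathcal B_i(\lambda_i)$, $\lambda_i\ge0$, are continuous and strictly monotone, with the same direction of monotonicity for both platforms, so each of $Q_i=\mathcal D_i$ and $Q_i=\mathcal B_i$ satisfies the hypothesis of (a).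
   Context: Model of platform $i$: passengers arrive as a Poisson process of rate $\lambda_i$; drivers arrive as a Poisson process of rate $\eta_i$ and wait FCFS. A passenger arriving when at least one driver waits is quoted price $\phi_i\in[0,\phi_h]$ and accepts (beginning a ride) with probability $f(\phi_i)$, else leaves; if no driver waits, the passenger is lost. Waiting drivers abandon independently at rate $\beta_i$; rides/breaks last Exp($\nu_i$), after which the driver rejoins the waiting queue with probability $p_i\in[0,1)$ and leaves otherwise. $e_i=\eta_i/(1-p_i)$. Here $f:[0,\phi_h]\to(0,1]$ is strictly concave, strictly decreasing, differentiable, $f(0)=1$. $\mathcal D_i(\lambda_i)=\bigl(\sum_{n\ge0}\frac{e_i^n}{\prod_{a=1}^n(\lambda_i f(\phi_i)+a\beta_i)}\bigr)^{-1}$ is the stationary probability of no waiting driver (empty product $=1$), and $\mathcal B_i=\mathcal D_i+(1-f(\phi_i))(1-\mathcal D_i)$ is the long-run fraction of passengers who do not take a ride. Two platforms share total passenger rate $\Lambda$; the Wardrop equilibrium for QoS metrics $Q_i$ is defined by the argmin in (a). *)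

(* Defs.v *)
From Stdlib Require Import Reals Lra.
From Coquelicot Require Import Coquelicot.
Open Scope R_scope.

Definition cont_on (P : R -> Prop) (Q : R -> R) : Prop :=
  forall x, P x -> filterlim Q (within P (locally x)) (locally (Q x)).

Definition strict_incr_on (P : R -> Prop) (Q : R -> R) : Prop :=
  forall x y, P x -> P y -> x < y -> Q x < Q y.

Definition strict_decr_on (P : R -> Prop) (Q : R -> R) : Prop :=
  forall x y, P x -> P y -> x < y -> Q y < Q x.

Definition wardrop_argmin (Lam : R) (Q1 Q2 : R -> R) (l : R) : Prop :=
  0 <= l <= Lam /\
  forall m, 0 <= m <= Lam ->
    (Q1 l - Q2 (Lam - l)) ^ 2 <= (Q1 m - Q2 (Lam - m)) ^ 2.

Definition admissible_f (phih : R) (f : R -> R) : Prop :=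
  f 0 = 1 /\
  (forall x, 0 <= x <= phih -> 0 < f x <= 1) /\
  strict_decr_on (fun x => 0 <= x <= phih) f /\
  (forall x y t, 0 <= x <= phih -> 0 <= y <= phih -> x <> y -> 0 < t < 1 ->
     t * f x + (1 - t) * f y < f (t * x + (1 - t) * y)) /\
  (forall x, 0 < x < phih -> ex_derive f x).

Fixpoint prodD (c beta : R) (n : nat) : R :=
  match n with
  | O => 1
  | S m => prodD c beta m * (c + INR (S m) * beta)
  end.

Definition e_rate (eta p : R) : R := eta / (1 - p).

(* D_i(lambda): stationary probability of no waiting driver *)
Definition Dfun (f : R -> R) (phi eta p beta lam : R) : R :=
  / Series (fun n => (e_rate eta p) ^ n / prodD (lam * f phi) beta n).

(* B_i(lambda): fraction of passengers who do not take a ride *)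
Definition Bfun (f : R -> R) (phi eta p beta lam : R) : R :=
  Dfun f phi eta p beta lam + (1 - f phi) * (1 - Dfun f phi eta p beta lam).

(* Main.v *)
Require Import Defs.
From Stdlib Require Import Reals Lra Lia.
From Coquelicot Require Import Coquelicot.
Open Scope R_scope.

Lemma prodD_S c b n : prodD c b (S n) = prodD c b n * (c + INR (S n) * b).
Proof. reflexivity. Qed.

Lemma prodD_O c b : prodD c b O = 1.
Proof. reflexivity. Qed.

Lemma prodD_pos c b n : 0 <= c -> 0 < b -> 0 < prodD c b n.
Proof.
  intros Hc Hb; induction n as [|n IH]; rewrite ?prodD_O, ?prodD_S; [lra|].
  apply Rmult_lt_0_compat; auto.
  assert (0 < INR (S n)) by (apply lt_0_INR; lia).
  assert (0 < INR (S n) * b) by (apply Rmult_lt_0_compat; lra). lra.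
Qed.

Lemma prodD_mono c c' b n : 0 <= c <= c' -> 0 < b -> prodD c b n <= prodD c' b n.
Proof.
  intros Hc Hb; induction n as [|n IH]; rewrite ?prodD_O, ?prodD_S; [lra|].
  assert (0 < INR (S n)) by (apply lt_0_INR; lia).
  pose proof (prodD_pos c b n ltac:(lra) Hb).
  assert (0 < INR (S n) * b) by (apply Rmult_lt_0_compat; lra).
  apply Rmult_le_compat; lra.
Qed.

Lemma prodD_0 b n : prodD 0 b n = INR (Factorial.fact n) * b ^ n.
Proof.
  induction n as [|n IH]; rewrite ?prodD_O, ?prodD_S; [simpl; lra|].
  rewrite IH, fact_simpl, mult_INR. simpl pow. ring.
Qed.

Lemma INR_le_pow2 n : INR n <= 2 ^ n.
Proof.
  induction n as [|n IH]; [simpl; lra|].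
  rewrite S_INR. simpl pow.
  assert (1 <= 2 ^ n) by (apply pow_R1_Rle; lra). lra.
Qed.

Lemma ex_exp y : ex_series (fun n => y ^ n / INR (Factorial.fact n)).
Proof.
  eapply ex_series_ext; [|exists (exp y); apply (is_exp_Reals y)].
  intros n; simpl. rewrite pow_n_pow. unfold scal; simpl; unfold mult; simpl.
  unfold Rdiv; ring.
Qed.

Definition tm x b c n := x ^ n / prodD c b n.
Definition T x b c := Series (tm x b c).

Lemma tm_bound x b c n : 0 < x -> 0 < b -> 0 <= c ->
  0 <= tm x b c n <= (x / b) ^ n / INR (Factorial.fact n).
Proof.
  intros Hx Hb Hc. unfold tm.
  pose proof (prodD_pos c b n Hc Hb).
  pose proof (prodD_mono 0 c b n ltac:(lra) Hb). rewrite prodD_0 in H0.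
  assert (0 < INR (Factorial.fact n)) by (apply lt_0_INR, Factorial.lt_O_fact).
  assert (0 < b ^ n) by (apply pow_lt; lra).
  assert (0 < x ^ n) by (apply pow_lt; lra).
  split. apply Rlt_le, Rdiv_lt_0_compat; lra.
  unfold Rdiv. rewrite Rpow_mult_distr, pow_inv, Rmult_assoc, <- Rinv_mult.
  apply Rmult_le_compat_l; [lra|]. apply Rinv_le_contravar; nra.
Qed.

Lemma ex_tm x b c : 0 < x -> 0 < b -> 0 <= c -> ex_series (tm x b c).
Proof.
  intros. apply (@ex_series_le R_AbsRing R_CompleteNormedModule _ (fun n => (x / b) ^ n / INR (Factorial.fact n))); [|apply ex_exp].
  intros n. pose proof (tm_bound x b c n H H0 H1).
  change norm with Rabs; simpl. rewrite Rabs_pos_eq; lra.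
Qed.

Lemma prodD_lip c c' b n : 0 <= c <= c' -> 0 < b ->
  prodD c' b n * (1 - INR n * (c' - c) / b) <= prodD c b n.
Proof.
  intros Hc Hb; induction n as [|n IH]; rewrite ?prodD_O, ?prodD_S; [simpl; lra|].
  pose proof (prodD_pos c' b n ltac:(lra) Hb) as HP'.
  assert (HN : 1 <= INR (S n)) by (rewrite S_INR; pose proof (pos_INR n); lra).
  assert (Hk : b <= INR (S n) * b) by nra.
  set (P' := prodD c' b n) in *. set (P := prodD c b n) in *.
  assert (Ha : 0 <= INR n * (c' - c) / b) by
    (apply Rmult_le_pos; [apply Rmult_le_pos; [apply pos_INR|lra]| apply Rlt_le, Rinv_0_lt_compat; lra]).
  set (a := INR n * (c' - c) / b) in *.
  assert (E : INR (S n) * (c' - c) / b = a + (c' - c) / b) by (unfold a; rewrite S_INR; field; lra).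
  rewrite E.
  apply Rle_trans with (P' * (1 - a) * (c + INR (S n) * b)).
  2: { apply Rmult_le_compat_r; [|exact IH]. lra. }
  set (k := c' + INR (S n) * b).
  assert (E2 : P' * (1 - a) * (c + INR (S n) * b) - P' * k * (1 - (a + (c' - c) / b))
     = P' * (c' - c) * ((k - b) / b + a)) by (unfold k; field; lra).
  assert (0 <= P' * (c' - c) * ((k - b) / b + a)).
  { apply Rmult_le_pos; [apply Rmult_le_pos; lra|].
    assert (0 <= (k - b) / b) by (apply Rmult_le_pos; [unfold k; lra| apply Rlt_le, Rinv_0_lt_compat; lra]). lra. }
  unfold k in *. lra.
Qed.

Lemma tm_lip x b c c' n : 0 < x -> 0 < b -> 0 <= c <= c' ->
  0 <= tm x b c n - tm x b c' n <= (c' - c) / b * ((2 * x / b) ^ n / INR (Factorial.fact n)).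
Proof.
  intros Hx Hb Hc. unfold tm.
  pose proof (prodD_pos c b n ltac:(lra) Hb) as HP.
  pose proof (prodD_pos c' b n ltac:(lra) Hb) as HP'.
  pose proof (prodD_mono c c' b n Hc Hb) as Hm.
  pose proof (prodD_lip c c' b n Hc Hb) as Hl.
  pose proof (tm_bound x b c n Hx Hb ltac:(lra)) as Hbd. unfold tm in Hbd.
  assert (0 < x ^ n) by (apply pow_lt; lra).
  assert (E : x ^ n / prodD c b n - x ^ n / prodD c' b n =
     x ^ n / prodD c b n * ((prodD c' b n - prodD c b n) / prodD c' b n)) by (field; lra).
  rewrite E.
  assert (H0 : 0 <= (prodD c' b n - prodD c b n) / prodD c' b n <= INR n * (c' - c) / b).
  { split. apply Rmult_le_pos; [lra| apply Rlt_le, Rinv_0_lt_compat; lra].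
    apply Rmult_le_reg_r with (prodD c' b n); [lra|].
    unfold Rdiv at 1. rewrite Rmult_assoc, Rinv_l by lra. nra. }
  assert (H1 : 0 <= x ^ n / prodD c b n) by lra.
  split. apply Rmult_le_pos; lra.
  apply Rle_trans with (x ^ n / prodD c b n * (INR n * (c' - c) / b)).
  apply Rmult_le_compat_l; lra.
  assert (E2 : (2 * x / b) ^ n = 2 ^ n * (x / b) ^ n).
  { unfold Rdiv. rewrite !Rpow_mult_distr. ring. }
  rewrite E2.
  pose proof (INR_le_pow2 n). pose proof (pos_INR n).
  assert (0 <= (c' - c) / b) by (apply Rmult_le_pos; [lra| apply Rlt_le, Rinv_0_lt_compat; lra]).
  assert (0 < INR (Factorial.fact n)) by (apply lt_0_INR, Factorial.lt_O_fact).
  assert (0 <= (x / b) ^ n / INR (Factorial.fact n)) by lra.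
  replace (x ^ n / prodD c b n * (INR n * (c' - c) / b)) with ((c' - c) / b * (INR n * (x ^ n / prodD c b n))) by (field; lra).
  replace (2 ^ n * (x / b) ^ n / INR (Factorial.fact n)) with (2 ^ n * ((x / b) ^ n / INR (Factorial.fact n))) by (field; lra).
  apply Rmult_le_compat_l; [lra|].
  apply Rmult_le_compat; lra.
Qed.

Lemma Series_zero : Series (fun _ => 0) = 0.
Proof.
  rewrite (Series_ext (fun _ => 0) (fun n => 0 * 0)) by (intros; ring).
  rewrite Series_scal_l. ring.
Qed.

Lemma Series_nonneg a : (forall n, 0 <= a n) -> ex_series a -> 0 <= Series a.
Proof.
  intros H He. rewrite <- Series_zero. apply Series_le; auto. intros n; split; [lra|auto].
Qed.

Lemma ex_minus (a b : nat -> R) : ex_series a -> ex_series b -> ex_series (fun n => a n - b n).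
Proof. intros Ha Hb. exact (ex_series_minus a b Ha Hb). Qed.

Definition Kc x b := / b * Series (fun n => (2 * x / b) ^ n / INR (Factorial.fact n)).

Lemma T_lip x b c c' : 0 < x -> 0 < b -> 0 <= c <= c' ->
  0 <= T x b c - T x b c' <= (c' - c) * Kc x b.
Proof.
  intros Hx Hb Hc. unfold T.
  pose proof (ex_tm x b c Hx Hb ltac:(lra)). pose proof (ex_tm x b c' Hx Hb ltac:(lra)).
  rewrite <- Series_minus by auto.
  pose proof (ex_minus _ _ H H0).
  split. apply Series_nonneg; auto. intros n; apply (tm_lip x b c c' n); auto.
  unfold Kc. replace ((c' - c) * (/ b * Series (fun n => (2 * x / b) ^ n / INR (Factorial.fact n))))
    with ((c' - c) / b * Series (fun n => (2 * x / b) ^ n / INR (Factorial.fact n))) by (unfold Rdiv; ring).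
  rewrite <- Series_scal_l. apply Series_le.
  intros n; apply (tm_lip x b c c' n); auto.
  apply (ex_series_scal_l ((c' - c) / b) _ (ex_exp (2 * x / b))).
Qed.

Lemma tm_0 x b c : tm x b c 0 = 1.
Proof. unfold tm. simpl. field. Qed.

Lemma T_ge1 x b c : 0 < x -> 0 < b -> 0 <= c -> 1 <= T x b c.
Proof.
  intros Hx Hb Hc. unfold T. pose proof (ex_tm x b c Hx Hb Hc).
  rewrite Series_incr_1 by auto. rewrite tm_0.
  assert (0 <= Series (fun k => tm x b c (S k))).
  { apply Series_nonneg. intros n; apply (tm_bound x b c (S n)); auto.
    apply ex_series_incr_1 in H. exact H. }
  lra.
Qed.

Lemma T_strict x b c c' : 0 < x -> 0 < b -> 0 <= c -> c < c' -> T x b c' < T x b c.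
Proof.
  intros Hx Hb Hc Hcc. unfold T.
  pose proof (ex_tm x b c Hx Hb ltac:(lra)). pose proof (ex_tm x b c' Hx Hb ltac:(lra)).
  cut (0 < Series (tm x b c) - Series (tm x b c')). lra.
  rewrite <- Series_minus by auto.
  pose proof (ex_minus _ _ H H0) as He.
  rewrite Series_incr_1 by auto.
  pose proof He as He1. apply ex_series_incr_1 in He1.
  rewrite Series_incr_1 by auto.
  apply ex_series_incr_1 in He1.
  assert (0 <= Series (fun k => tm x b c (S (S k)) - tm x b c' (S (S k)))).
  { apply Series_nonneg; auto. intros n; apply (tm_lip x b c c' (S (S n))); auto; lra. }
  assert (tm x b c' 1 < tm x b c 1).
  { unfold tm. rewrite !prodD_S, !prodD_O. simpl pow. simpl INR.
    apply Rmult_lt_compat_l; [lra|]. apply Rinv_lt_contravar; nra. }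
  rewrite !tm_0. lra.
Qed.

Lemma lip_cont (P : R -> Prop) (Q : R -> R) L : 0 <= L ->
  (forall x y, P x -> P y -> Rabs (Q x - Q y) <= L * Rabs (x - y)) -> cont_on P Q.
Proof.
  intros HL H x Px A [eps HA].
  assert (Hd : 0 < eps / (L + 1)) by (apply Rdiv_lt_0_compat; [apply cond_pos|lra]).
  exists (mkposreal _ Hd). intros y Hy Py. apply HA.
  change (Rabs (Q y - Q x) < eps). change (Rabs (y - x) < eps / (L + 1)) in Hy.
  pose proof (H y x Py Px). pose proof (Rabs_pos (y - x)).
  apply Rle_lt_trans with (L * Rabs (y - x)); auto.
  assert (L * Rabs (y - x) <= L * (eps / (L + 1))) by (apply Rmult_le_compat_l; lra).
  assert (L * (eps / (L + 1)) < eps).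
  { pose proof (cond_pos eps). apply Rmult_lt_reg_r with (L + 1); [lra|].
    unfold Rdiv. rewrite Rmult_assoc, (Rmult_assoc eps), Rinv_l by lra. nra. }
  lra.
Qed.

Lemma Kc_nonneg x b : 0 < x -> 0 < b -> 0 <= Kc x b.
Proof. intros. pose proof (T_lip x b 0 1 H H0 ltac:(lra)). lra. Qed.

Lemma invT_lip x b c c' : 0 < x -> 0 < b -> 0 <= c -> 0 <= c' ->
  Rabs (/ T x b c - / T x b c') <= Kc x b * Rabs (c - c').
Proof.
  intros Hx Hb Hc Hc'.
  assert (gen : forall c c', 0 <= c <= c' -> Rabs (/ T x b c - / T x b c') <= Kc x b * Rabs (c - c')).
  { clear c c' Hc Hc'. intros c c' Hc.
    pose proof (T_lip x b c c' Hx Hb Hc).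
    pose proof (T_ge1 x b c Hx Hb ltac:(lra)). pose proof (T_ge1 x b c' Hx Hb ltac:(lra)).
    rewrite (Rabs_minus_sym c), (Rabs_pos_eq (c' - c)) by lra.
    assert (E : / T x b c - / T x b c' = - ((T x b c - T x b c') / (T x b c * T x b c'))) by (field; lra).
    rewrite E, Rabs_Ropp, Rabs_pos_eq.
    2: { apply Rmult_le_pos; [lra|]. apply Rlt_le, Rinv_0_lt_compat. nra. }
    apply Rle_trans with (T x b c - T x b c'); [|lra].
    apply Rmult_le_reg_r with (T x b c * T x b c'). nra.
    assert (1 <= T x b c * T x b c') by nra.
    unfold Rdiv. rewrite Rmult_assoc, Rinv_l by nra. rewrite Rmult_1_r.
    rewrite <- (Rmult_1_r (T x b c - T x b c')) at 1. apply Rmult_le_compat_l; lra. }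
  destruct (Rle_dec c c'). apply gen; lra.
  rewrite Rabs_minus_sym, (Rabs_minus_sym c). apply gen; lra.
Qed.

Lemma invT_strict x b c c' : 0 < x -> 0 < b -> 0 <= c -> c < c' -> / T x b c < / T x b c'.
Proof.
  intros. pose proof (T_strict x b c c' H H0 H1 H2). pose proof (T_ge1 x b c' H H0 ltac:(lra)).
  apply Rinv_lt_contravar; nra.
Qed.

Lemma Dfun_eq f phi eta p beta lam :
  Dfun f phi eta p beta lam = / T (e_rate eta p) beta (lam * f phi).
Proof. reflexivity. Qed.

Lemma D_props f phi eta p beta : 0 < f phi -> 0 < eta -> 0 <= p < 1 -> 0 < beta ->
  cont_on (fun x => 0 <= x) (Dfun f phi eta p beta) /\
  strict_incr_on (fun x => 0 <= x) (Dfun f phi eta p beta) /\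
  cont_on (fun x => 0 <= x) (Bfun f phi eta p beta) /\
  strict_incr_on (fun x => 0 <= x) (Bfun f phi eta p beta).
Proof.
  intros Hf Heta Hp Hb.
  assert (Hx : 0 < e_rate eta p) by (apply Rdiv_lt_0_compat; lra).
  set (x := e_rate eta p) in *.
  pose proof (Kc_nonneg x beta Hx Hb) as HK.
  assert (Dlip : forall l l', 0 <= l -> 0 <= l' ->
     Rabs (Dfun f phi eta p beta l - Dfun f phi eta p beta l') <= (Kc x beta * f phi) * Rabs (l - l')).
  { intros l l' Hl Hl'. rewrite !Dfun_eq.
    eapply Rle_trans. apply invT_lip; auto; apply Rmult_le_pos; lra.
    rewrite <- Rmult_minus_distr_r, Rabs_mult, (Rabs_pos_eq (f phi)) by lra. unfold x; right; ring. }
  assert (Dinc : strict_incr_on (fun x => 0 <= x) (Dfun f phi eta p beta)).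
  { intros l l' Hl Hl' Hll. rewrite !Dfun_eq. apply invT_strict; auto.
    all: try (apply Rmult_le_pos; lra); try (apply Rmult_lt_compat_r; lra). }
  assert (BE : forall l, Bfun f phi eta p beta l = f phi * Dfun f phi eta p beta l + (1 - f phi)).
  { intros; unfold Bfun; ring. }
  split; [apply (lip_cont _ _ (Kc x beta * f phi)); auto; apply Rmult_le_pos; lra|].
  split; [exact Dinc|].
  split.
  - apply (lip_cont _ _ (f phi * (Kc x beta * f phi))). apply Rmult_le_pos; [lra|apply Rmult_le_pos; lra].
    intros l l' Hl Hl'. rewrite !BE.
    replace (f phi * Dfun f phi eta p beta l + (1 - f phi) - (f phi * Dfun f phi eta p beta l' + (1 - f phi)))
      with (f phi * (Dfun f phi eta p beta l - Dfun f phi eta p beta l')) by ring.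
    rewrite Rabs_mult, (Rabs_pos_eq (f phi)) by lra. rewrite Rmult_assoc.
    apply Rmult_le_compat_l; [lra|]. apply Dlip; auto.
  - intros l l' Hl Hl' Hll. rewrite !BE. pose proof (Dinc l l' Hl Hl' Hll).
    apply Rplus_lt_compat_r, Rmult_lt_compat_l; lra.
Qed.
Definition ec (Lam : R) (g : R -> R) : Prop :=
  forall x, 0 <= x <= Lam -> forall eps, 0 < eps -> exists d, 0 < d /\
    forall y, 0 <= y <= Lam -> Rabs (y - x) < d -> Rabs (g y - g x) < eps.

Lemma cont_eps Lam Q : cont_on (fun x => 0 <= x <= Lam) Q -> ec Lam Q.
Proof.
  intros H x Px eps He.
  destruct (H x Px (fun z => Rabs (z - Q x) < eps)) as [d Hd].
  { exists (mkposreal eps He). intros y Hy. exact Hy. }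
  exists d. split; [apply cond_pos|]. intros y Py Hy. apply (Hd y); auto.
Qed.

Definition cl (Lam y : R) := Rmax 0 (Rmin Lam y).

Lemma cl_in Lam y : 0 <= Lam -> 0 <= cl Lam y <= Lam.
Proof. intros. unfold cl, Rmax, Rmin. repeat destruct Rle_dec; lra. Qed.

Lemma cl_id Lam y : 0 <= y <= Lam -> cl Lam y = y.
Proof. intros. unfold cl, Rmax, Rmin. repeat destruct Rle_dec; lra. Qed.

Lemma cl_lip Lam x y : 0 <= Lam -> Rabs (cl Lam y - cl Lam x) <= Rabs (y - x).
Proof.
  intros. unfold cl, Rmax, Rmin. unfold Rabs.
  repeat (destruct Rle_dec); repeat (destruct Rcase_abs); lra.
Qed.

Lemma ivt_g Lam g a b : ec Lam g -> 0 <= a -> a < b -> b <= Lam -> g a < 0 -> 0 < g b ->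
  exists z, a <= z <= b /\ g z = 0.
Proof.
  intros Hc Ha Hab Hb Hga Hgb.
  set (h := fun y => g (cl Lam y)).
  assert (Hh : continuity h).
  { intros x0. unfold continuity_pt, continue_in, limit1_in, limit_in. intros eps He.
    destruct (Hc (cl Lam x0) (cl_in Lam x0 ltac:(lra)) eps He) as [d [Hd Hd']].
    exists d. split; auto. intros y [_ Hy]. simpl in *. unfold R_dist in *.
    unfold h. apply Hd'. apply cl_in; lra.
    eapply Rle_lt_trans; [apply cl_lip; lra|exact Hy]. }
  destruct (IVT h a b Hh Hab) as [z [Hz Hz']].
  - unfold h; rewrite cl_id by lra; auto.
  - unfold h; rewrite cl_id by lra; auto.
  - exists z. split; auto. unfold h in Hz'. rewrite cl_id in Hz' by lra. auto.
Qed.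

Lemma core Lam g : 0 < Lam -> ec Lam g ->
  (forall x y, 0 <= x <= Lam -> 0 <= y <= Lam -> x < y -> g x < g y) ->
  exists! l, 0 <= l <= Lam /\ forall m, 0 <= m <= Lam -> g l ^ 2 <= g m ^ 2.
Proof.
  intros HL Hc Hi.
  assert (Hmono : forall x y, 0 <= x <= Lam -> 0 <= y <= Lam -> x <= y -> g x <= g y).
  { intros x y Hx Hy Hxy. destruct (Req_dec x y). subst; lra. left; apply Hi; lra. }
  assert (uniq : forall l l', (0 <= l <= Lam /\ forall m, 0 <= m <= Lam -> g l ^ 2 <= g m ^ 2) ->
     (0 <= l' <= Lam /\ forall m, 0 <= m <= Lam -> g l' ^ 2 <= g m ^ 2) -> l < l' -> False).
  { intros l l' [Hl Hlm] [Hl' Hlm'] Hll.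
    pose proof (Hlm l' Hl'). pose proof (Hlm' l Hl). pose proof (Hi l l' Hl Hl' Hll).
    assert (g l < 0 /\ 0 < g l') as [G1 G2] by (simpl in *; split; nra).
    destruct (ivt_g Lam g l l' Hc ltac:(lra) Hll ltac:(lra) G1 G2) as [z [Hz Hz']].
    pose proof (Hlm z ltac:(lra)) as Hz2. rewrite Hz' in Hz2. simpl in *. nra. }
  assert (ex : exists l, 0 <= l <= Lam /\ forall m, 0 <= m <= Lam -> g l ^ 2 <= g m ^ 2).
  { destruct (Rle_dec 0 (g 0)).
    - exists 0. split; [lra|]. intros m Hm. pose proof (Hmono 0 m ltac:(lra) Hm ltac:(lra)). simpl; nra.
    - destruct (Rle_dec (g Lam) 0).
      + exists Lam. split; [lra|]. intros m Hm. pose proof (Hmono m Lam Hm ltac:(lra) ltac:(lra)). simpl; nra.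
      + destruct (ivt_g Lam g 0 Lam Hc ltac:(lra) HL ltac:(lra) ltac:(lra) ltac:(lra)) as [z [Hz Hz']].
        exists z. split; [lra|]. intros m Hm. rewrite Hz'. simpl. nra. }
  destruct ex as [l Hl]. exists l. split; auto.
  intros l' Hl'. destruct (Rtotal_order l l') as [H|[H|H]]; auto.
  - exfalso; exact (uniq l l' Hl Hl' H).
  - exfalso; exact (uniq l' l Hl' Hl H).
Qed.

Lemma partA : forall (Lam : R) (Q1 Q2 : R -> R),
     0 < Lam ->
     cont_on (fun x => 0 <= x <= Lam) Q1 ->
     cont_on (fun x => 0 <= x <= Lam) Q2 ->
     ((strict_incr_on (fun x => 0 <= x <= Lam) Q1 /\
       strict_incr_on (fun x => 0 <= x <= Lam) Q2) \/
      (strict_decr_on (fun x => 0 <= x <= Lam) Q1 /\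
       strict_decr_on (fun x => 0 <= x <= Lam) Q2)) ->
     exists! l, wardrop_argmin Lam Q1 Q2 l.
Proof.
  intros Lam Q1 Q2 HL C1 C2 Hmon.
  apply cont_eps in C1. apply cont_eps in C2.
  set (g := fun l => Q1 l - Q2 (Lam - l)).
  assert (Hg : ec Lam g).
  { intros x Hx eps He.
    destruct (C1 x Hx (eps/2) ltac:(lra)) as [d1 [Hd1 H1]].
    destruct (C2 (Lam - x) ltac:(lra) (eps/2) ltac:(lra)) as [d2 [Hd2 H2]].
    exists (Rmin d1 d2). split. apply Rmin_pos; auto.
    intros y Hy Hyx. pose proof (Rmin_l d1 d2). pose proof (Rmin_r d1 d2).
    pose proof (H1 y Hy ltac:(lra)).
    assert (Rabs ((Lam - y) - (Lam - x)) < d2) by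
      (replace ((Lam - y) - (Lam - x)) with (- (y - x)) by ring; rewrite Rabs_Ropp; lra).
    pose proof (H2 (Lam - y) ltac:(lra) H4).
    unfold g. replace (Q1 y - Q2 (Lam - y) - (Q1 x - Q2 (Lam - x))) with
      ((Q1 y - Q1 x) + - (Q2 (Lam - y) - Q2 (Lam - x))) by ring.
    eapply Rle_lt_trans; [apply Rabs_triang|]. rewrite Rabs_Ropp. lra. }
  assert (Hng : ec Lam (fun l => - g l)).
  { intros x Hx eps He. destruct (Hg x Hx eps He) as [d [Hd H]]. exists d; split; auto.
    intros y Hy Hyx. replace (- g y - - g x) with (- (g y - g x)) by ring. rewrite Rabs_Ropp. auto. }
  assert (E : forall l, wardrop_argmin Lam Q1 Q2 l <->
     (0 <= l <= Lam /\ forall m, 0 <= m <= Lam -> g l ^ 2 <= g m ^ 2)) by (intros; unfold wardrop_argmin, g; tauto).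
  assert (E' : forall l, wardrop_argmin Lam Q1 Q2 l <->
     (0 <= l <= Lam /\ forall m, 0 <= m <= Lam -> (- g l) ^ 2 <= (- g m) ^ 2)).
  { intros l. rewrite E. split; intros [H1 H2]; split; auto; intros m Hm; specialize (H2 m Hm);
    replace ((- g l) ^ 2) with (g l ^ 2) in * by ring; replace ((- g m) ^ 2) with (g m ^ 2) in * by ring; auto. }
  destruct Hmon as [[I1 I2]|[D1 D2]].
  - destruct (core Lam g HL Hg) as [l [Hl Hu]].
    { intros x y Hx Hy Hxy. unfold g. pose proof (I1 x y Hx Hy Hxy).
      pose proof (I2 (Lam - y) (Lam - x) ltac:(lra) ltac:(lra) ltac:(lra)). lra. }
    exists l. split. apply E; auto. intros l' Hl'. apply Hu, E; auto.
  - destruct (core Lam (fun l => - g l) HL Hng) as [l [Hl Hu]].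
    { intros x y Hx Hy Hxy. unfold g. pose proof (D1 x y Hx Hy Hxy).
      pose proof (D2 (Lam - y) (Lam - x) ltac:(lra) ltac:(lra) ltac:(lra)). lra. }
    exists l. split. apply E'; auto. intros l' Hl'. apply Hu, E'; auto.
Qed.

Theorem lemma2 :
  (* (a) existence and uniqueness of the Wardrop equilibrium *)
  (forall (Lam : R) (Q1 Q2 : R -> R),
     0 < Lam ->
     cont_on (fun x => 0 <= x <= Lam) Q1 ->
     cont_on (fun x => 0 <= x <= Lam) Q2 ->
     ((strict_incr_on (fun x => 0 <= x <= Lam) Q1 /\
       strict_incr_on (fun x => 0 <= x <= Lam) Q2) \/
      (strict_decr_on (fun x => 0 <= x <= Lam) Q1 /\
       strict_decr_on (fun x => 0 <= x <= Lam) Q2)) ->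
     exists! l, wardrop_argmin Lam Q1 Q2 l)
  /\
  (* (b) D_i and B_i are continuous, strictly monotone in lambda_i >= 0,
     with the same direction for both platforms *)
  (forall (phih : R) (f : R -> R)
          (phi1 eta1 p1 beta1 phi2 eta2 p2 beta2 : R),
     admissible_f phih f ->
     0 <= phi1 <= phih -> 0 < eta1 -> 0 <= p1 < 1 -> 0 < beta1 ->
     0 <= phi2 <= phih -> 0 < eta2 -> 0 <= p2 < 1 -> 0 < beta2 ->
     (cont_on (fun x => 0 <= x) (Dfun f phi1 eta1 p1 beta1) /\
      cont_on (fun x => 0 <= x) (Dfun f phi2 eta2 p2 beta2) /\
      ((strict_incr_on (fun x => 0 <= x) (Dfun f phi1 eta1 p1 beta1) /\
        strict_incr_on (fun x => 0 <= x) (Dfun f phi2 eta2 p2 beta2)) \/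
       (strict_decr_on (fun x => 0 <= x) (Dfun f phi1 eta1 p1 beta1) /\
        strict_decr_on (fun x => 0 <= x) (Dfun f phi2 eta2 p2 beta2))))
     /\
     (cont_on (fun x => 0 <= x) (Bfun f phi1 eta1 p1 beta1) /\
      cont_on (fun x => 0 <= x) (Bfun f phi2 eta2 p2 beta2) /\
      ((strict_incr_on (fun x => 0 <= x) (Bfun f phi1 eta1 p1 beta1) /\
        strict_incr_on (fun x => 0 <= x) (Bfun f phi2 eta2 p2 beta2)) \/
       (strict_decr_on (fun x => 0 <= x) (Bfun f phi1 eta1 p1 beta1) /\
        strict_decr_on (fun x => 0 <= x) (Bfun f phi2 eta2 p2 beta2))))).
Proof.
  split; [exact partA|].
  intros phih f phi1 eta1 p1 beta1 phi2 eta2 p2 beta2 Hf Hp1 He1 Hq1 Hb1 Hp2 He2 Hq2 Hb2.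
  destruct Hf as [_ [Hpos _]].
  pose proof (Hpos phi1 Hp1) as F1. pose proof (Hpos phi2 Hp2) as F2.
  destruct (D_props f phi1 eta1 p1 beta1 ltac:(lra) He1 Hq1 Hb1) as [a1 [b1 [c1 d1]]].
  destruct (D_props f phi2 eta2 p2 beta2 ltac:(lra) He2 Hq2 Hb2) as [a2 [b2 [c2 d2]]].
  split; (split; [auto|split; [auto|left; split; auto]]).
Qed.
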